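(* Let $R_n\in\mathbb{Z}[x,y,z]$ be the Markov–Pell polynomials. Then for all $k\ge2$, $$R_{2k+1}=(x^2+y^2)(x^2+y^2+z^2)\,R_{2k-1}-x^2y^2z^4\,R_{2k-3},$$ and for all $k\ge0$, $R_{2k+1}(x,y,z)=P_{k/(k+1)}(x^2,y^2,z^2)$ (with $P_{0/1}:=1$).
   Context: Markov polynomials. Let $x,y,z$ be indeterminates. Consider the set consisting of all rationals $\rho\in[0,1]$, each written in lowest terms $\rho=a/b$ with integers $a\ge 0$, $b\ge 1$, together with the formal symbol $1/0$. Define Laurent polynomials $M_\rho(x,y,z)$ recursively by $M_{1/0}=y$, $M_{0/1}=x$, $M_{1/1}=\frac{x^2+y^2}{z}$, and: whenever $a/b$, $c/d$ are in this set with $|ad-bc|=1$ and $(a+2c)/(b+2d)\in[0,1]$, then $M_{\frac{a+2c}{b+2d}}=\big(M_{c/d}^2+M_{\frac{a+c}{b+d}}^2\big)/M_{a/b}$. This determines $M_\rho$ for every rational $\rho\in[0,1]$. Numerator. For coprime $1\le a\le b$, $P_{a/b}(u,v,w)$ denotes the homogeneous polynomial of degree $a+b-1$ such that $M_{a/b}(x,y,z)=P_{a/b}(x^2,y^2,z^2)/(x^{a-1}y^{b-1}z^{a+b-1})$; its existence is known. Markov–Pell polynomials: $R_0=0$, $R_1=1$, and for $k\ge1$: $R_{2k}=(x^2+y^2)R_{2k-1}+y^2z^2R_{2k-2}$, $R_{2k+1}=(x^2+y^2)R_{2k}+x^2z^2R_{2k-1}$. *)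

(* Defs.v *)
From HB Require Import structures.
From mathcomp Require Import all_boot all_order all_algebra.
From mathcomp Require Import fraction.
From mathcomp Require Import mpoly.
Set Implicit Arguments. Unset Strict Implicit. Unset Printing Implicit Defensive.
Import Order.TTheory GRing.Theory Num.Theory.
Local Open Scope ring_scope.

Definition Zxyz := {mpoly int[3]}.
Definition vx : Zxyz := 'X_(@Ordinal 3 0 isT).
Definition vy : Zxyz := 'X_(@Ordinal 3 1 isT).
Definition vz : Zxyz := 'X_(@Ordinal 3 2 isT).

Definition Fxyz := {fraction Zxyz}.
Definition fx : Fxyz := tofrac vx.
Definition fy : Fxyz := tofrac vy.
Definition fz : Fxyz := tofrac vz.

(* Markov-Pell polynomials: RR n = (R_n, R_{n+1}), with
   R_m = (x^2+y^2) R_{m-1} + c_m R_{m-2} for m >= 2,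
   c_m = y^2 z^2 if m even, x^2 z^2 if m odd. *)
Fixpoint RR (n : nat) : Zxyz * Zxyz :=
  match n with
  | 0 => (0, 1)
  | n'.+1 =>
      let (a, b) := RR n' in
      (b, (vx ^+ 2 + vy ^+ 2) * b
          + (if odd n'.+2 then vx ^+ 2 * vz ^+ 2 else vy ^+ 2 * vz ^+ 2) * a)
  end.
Definition MarkovPell (n : nat) : Zxyz := (RR n).1.

(* Markov polynomials M_{a/b}, via descent in the Stern-Brocot (Farey) tree.
   A node is a pair of Farey neighbours p = pa/pb, q = qa/qb with mediant
   m = (pa+qa)/(pb+qb); Mp Mm Mq are the attached values.
   Moving to the child (m,q), the new mediant (p+2q) gets value (Mq^2+Mm^2)/Mp;
   moving to the child (p,m), the new mediant (2p+q) gets value (Mp^2+Mm^2)/Mq;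
   both are instances of the defining recursion. *)
Fixpoint mdesc (fuel : nat) (a b pa pb qa qb : nat) (Mp Mm Mq : Fxyz) : Fxyz :=
  match fuel with
  | 0 => Mm
  | f.+1 =>
      let ma := (pa + qa)%N in let mb := (pb + qb)%N in
      if (a * mb == ma * b)%N then Mm
      else if (a * mb < ma * b)%N
           then mdesc f a b pa pb ma mb Mp ((Mp ^+ 2 + Mm ^+ 2) / Mq) Mm
           else mdesc f a b ma mb qa qb Mm ((Mq ^+ 2 + Mm ^+ 2) / Mp) Mq
  end.

(* M_{a/b} for a/b in lowest terms (a <= b, or a/b = 1/0).
   Root node: p = 0/1 (M = x), q = 1/0 (M = y), mediant 1/1 (M = (x^2+y^2)/z). *)
Definition Markov (a b : nat) : Fxyz :=
  if (a == 1%N) && (b == 0%N) then fy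
  else if (a == 0%N) && (b == 1%N) then fx
  else mdesc (a + b) a b 0 1 1 0 fx ((fx ^+ 2 + fy ^+ 2) / fz) fy.

(* P is "the" numerator of M_{a/b}: homogeneous of degree a+b-1 with
   M_{a/b}(x,y,z) = P(x^2,y^2,z^2) / (x^(a-1) y^(b-1) z^(a+b-1)). *)
Definition sqsubst (P : Zxyz) : Zxyz :=
  P \mPo [tuple vx ^+ 2; vy ^+ 2; vz ^+ 2].

Definition IsMarkovNumerator (a b : nat) (P : Zxyz) : Prop :=
  P \is (a + b - 1)%N.-homog /\
  Markov a b * (fx ^+ (a - 1) * fy ^+ (b - 1) * fz ^+ (a + b - 1))
    = tofrac (sqsubst P).

(* Main.v *)
Require Import Defs.
From HB Require Import structures.
From mathcomp Require Import all_boot all_order all_algebra.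
From mathcomp Require Import fraction mpoly.
From mathcomp Require Import ring zify.
Import Order.TTheory GRing.Theory Num.Theory.
Local Open Scope ring_scope.

Definition sP : Zxyz := vx ^+ 2 + vy ^+ 2.
Definition cP (n : nat) : Zxyz := if odd n then vx ^+ 2 * vz ^+ 2 else vy ^+ 2 * vz ^+ 2.

Lemma RR_S n : RR n.+1 = ((RR n).2, sP * (RR n).2 + cP n.+2 * (RR n).1).
Proof. by rewrite /=; case: (RR n). Qed.

Lemma MP_SS n : MarkovPell n.+2 = sP * MarkovPell n.+1 + cP n.+2 * MarkovPell n.
Proof. rewrite /MarkovPell /=; case: (RR n) => a b /=. by rewrite /cP /sP /= negbK. Qed.

Lemma MP0 : MarkovPell 0 = 0. Proof. by []. Qed.
Lemma MP1 : MarkovPell 1 = 1. Proof. by []. Qed.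

Definition u (j : nat) := MarkovPell j.*2.+1.
Definition AA : Zxyz := sP * (sP + vz ^+ 2).
Definition BB : Zxyz := vx ^+ 2 * vy ^+ 2 * vz ^+ 4.

Lemma u_rec j : u j.+2 = AA * u j.+1 - BB * u j.
Proof.
rewrite /u !doubleS.
have e1 := MP_SS (j.*2.+3). have e2 := MP_SS (j.*2.+2). have e3 := MP_SS (j.*2.+1).
rewrite /cP /= !odd_double /= in e1 e2 e3.
rewrite e1 e2 e3 /AA /BB /sP. ring.
Qed.

Definition CC : Zxyz := vy ^+ 2 * vz ^+ 2 * sP ^+ 2.

Lemma u0 : u 0 = 1. Proof. by []. Qed.
Lemma u1 : u 1 = sP ^+ 2 + vx ^+ 2 * vz ^+ 2.
Proof. rewrite /u /= MP_SS MP_SS MP0 MP1 /cP /=. rewrite /sP. ring. Qed.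

Lemma cassini j : u j.+2 * u j - u j.+1 ^+ 2 = BB ^+ j * CC.
Proof.
elim: j => [|j IH].
  rewrite u_rec u1 u0 /AA /BB /CC /sP. ring.
rewrite (u_rec j.+1) (exprS BB) -mulrA -IH (u_rec j). ring.
Qed.

Definition ev (p : Zxyz) : int := p.@[fun _ => 1].

Lemma ev_pos n : (0 <= ev (MarkovPell n))%R /\ (1 <= ev (MarkovPell n.+1))%R.
Proof.
elim: n => [|n [IH1 IH2]]; first by rewrite /ev MP0 MP1 meval0 meval1.
split; first by apply: le_trans IH2.
rewrite MP_SS /ev mevalD !mevalM.
have -> : sP.@[fun _ => 1] = 2 by rewrite /sP mevalD !rmorphXn /= !mevalXU.
have -> : (cP n.+2).@[fun _ => (1:int)] = 1.
  by rewrite /cP; case: ifP => _; rewrite mevalM !rmorphXn /= !mevalXU !expr1n.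
rewrite /ev in IH1 IH2. rewrite mul1r. 
apply: (le_trans IH2). rewrite mulr2n mulrDl mul1r -addrA lerDl. 
by apply: addr_ge0 => //; apply: (le_trans _ IH2).
Qed.

Lemma MP_neq0 n : MarkovPell n.+1 != 0.
Proof.
apply/negP => /eqP H. have := (ev_pos n).2. by rewrite H /ev meval0.
Qed.


Definition cF : Fxyz := (fx ^+ 2 + fy ^+ 2) / fz.
Definition TF : Fxyz := fx * fy * fz ^+ 2.

Lemma v_neq0 (p : Zxyz) : ev p = 1 -> tofrac p != 0.
Proof. move=> h; rewrite tofrac_eq0; apply/negP => /eqP e; by rewrite e /ev meval0 in h. Qed.

Lemma fx_neq0 : fx != 0. Proof. by apply: v_neq0; rewrite /ev mevalXU. Qed.
Lemma fy_neq0 : fy != 0. Proof. by apply: v_neq0; rewrite /ev mevalXU. Qed.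
Lemma fz_neq0 : fz != 0. Proof. by apply: v_neq0; rewrite /ev mevalXU. Qed.
Lemma TF_neq0 : TF != 0.
Proof.
have h3 : fz ^+ 2 != 0 := @expf_neq0 _ fz 2 fz_neq0.
have h12 : fx * fy != 0 := @mulf_neq0 _ fx fy fx_neq0 fy_neq0.
exact: (@mulf_neq0 _ _ _ h12 h3).
Qed.
Lemma U_neq0 j : tofrac (u j) != 0.
Proof. rewrite tofrac_eq0 /u. exact: MP_neq0. Qed.

Lemma tfx : tofrac vx = fx. Proof. by []. Qed.
Lemma cassiniF j : tofrac (u j.+2) * tofrac (u j) =
  (TF ^+ j) ^+ 2 * (fy ^+ 2 * fz ^+ 2 * (fx ^+ 2 + fy ^+ 2) ^+ 2)
    + tofrac (u j.+1) ^+ 2.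
Proof.
have h := cassini j.
have h2 : u j.+2 * u j = BB ^+ j * CC + u j.+1 ^+ 2 by rewrite -h subrK.
have eB : tofrac BB = TF ^+ 2.
  rewrite /BB /TF !(rmorphM, rmorphXn) /=. rewrite -/fx -/fy -/fz. ring.
have eC : tofrac CC = fy ^+ 2 * fz ^+ 2 * (fx ^+ 2 + fy ^+ 2) ^+ 2.
  rewrite /CC /sP !(rmorphM, rmorphXn, rmorphD) /=. by rewrite -/fx -/fy -/fz.
move: h2; move: BB CC eB eC => b c eB eC h2.
have := congr1 (@tofrac Zxyz) h2.
rewrite !(rmorphM, rmorphD, rmorphXn) /= eB eC => ->. rewrite -exprM mulnC exprM. by [].
Qed.


Lemma alg (F : fieldType) (x y z W U0 U1 : F) : x != 0 -> y != 0 -> z != 0 -> W != 0 -> U0 != 0 ->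
  ((((x ^+ 2 + y ^+ 2) / z) ^+ 2 + (x * U1 / (x * y * z ^+ 2 * W)) ^+ 2) / (x * U0 / W) *
   (x * y * z ^+ 2 * (x * y * z ^+ 2 * W))) * U0 =
  x * (W ^+ 2 * (y ^+ 2 * z ^+ 2 * (x ^+ 2 + y ^+ 2) ^+ 2) + U1 ^+ 2).
Proof. move=> hx hy hz hW hU. field. by rewrite hx hy hz hW hU. Qed.

Lemma step_alg j Mp Mm :
  Mp * TF ^+ j = fx * tofrac (u j) -> Mm * TF ^+ j.+1 = fx * tofrac (u j.+1) ->
  (cF ^+ 2 + Mm ^+ 2) / Mp * TF ^+ j.+2 = fx * tofrac (u j.+2).
Proof.
move=> hp hm.
have hW : TF ^+ j != 0 := @expf_neq0 _ _ j TF_neq0.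
have hU0 := U_neq0 j.
have hc := cassiniF j.
rewrite (exprS TF j) in hm. rewrite (exprS TF j.+1) (exprS TF j).
move: hp hm hc hW hU0. 
move: (TF ^+ j) (tofrac (u j)) (tofrac (u j.+1)) (tofrac (u j.+2)) => W U0 U1 U2.
move=> hp hm hc hW hU0.
have eMp : Mp = fx * U0 / W by rewrite -hp (mulfK hW).
have hTW : TF * W != 0 := @mulf_neq0 _ _ _ TF_neq0 hW.
have eMm : Mm = fx * U1 / (TF * W) by rewrite -hm (mulfK hTW).
apply: (mulIf hU0). rewrite -[RHS]mulrA hc eMp eMm.
have hx := fx_neq0. have hy := fy_neq0. have hz := fz_neq0.
rewrite /cF /TF. exact: (@alg _ _ _ _ _ _ _ hx hy hz hW hU0).
Qed.



Lemma walk k f : forall j Mp Mm, (j < k)%N -> (k - j <= f)%N ->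
  Mp * TF ^+ j = fx * tofrac (u j) -> Mm * TF ^+ j.+1 = fx * tofrac (u j.+1) ->
  mdesc f k k.+1 j j.+1 1 1 Mp Mm cF * TF ^+ k = fx * tofrac (u k).
Proof.
elim: f => [|f IH] j Mp Mm hjk hf hp hm; first by exfalso; lia.
rewrite [mdesc _ _ _ _ _ _ _ _ _ _]/=.
have [ek|nek] := eqVneq k j.+1.
  subst k. rewrite ifT; last by apply/eqP; lia. exact: hm.
rewrite ifF; last by apply/eqP; lia.
rewrite ifF; last by apply/negbTE; rewrite -leqNgt; lia.
rewrite !addn1.
apply: IH; [lia|lia|exact: hm|].
exact: step_alg.
Qed.

Lemma alg1 (F : fieldType) (x y z : F) : x != 0 -> y != 0 -> z != 0 ->
  (x ^+ 2 + ((x ^+ 2 + y ^+ 2) / z) ^+ 2) / y * (x * y * z ^+ 2) =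
  x * ((x ^+ 2 + y ^+ 2) ^+ 2 + x ^+ 2 * z ^+ 2).
Proof. move=> hx hy hz. field. by rewrite hy hz. Qed.

Lemma markov_val k : (1 <= k)%N -> Markov k k.+1 * TF ^+ k = fx * tofrac (u k).
Proof.
move=> hk.
rewrite /Markov andbF /=.
have -> : (k == 0%N) = false by apply/eqP; lia.
rewrite addnS [mdesc _ _ _ _ _ _ _ _ _ _]/=.
rewrite ifF; last by apply/eqP; lia.
rewrite ifT; last by lia.
apply: walk; [lia|lia| |].
  by rewrite expr0 mulr1.
rewrite (expr1 TF) u1 /sP.
rewrite !(rmorphM, rmorphD, rmorphXn) /= -/fx -/fy -/fz.
exact: (@alg1 _ _ _ _ fx_neq0 fy_neq0 fz_neq0).
Qed.

Theorem mainTheorem8 :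
  (forall k : nat, (2 <= k)%N ->
     MarkovPell (2 * k + 1) =
       (vx ^+ 2 + vy ^+ 2) * (vx ^+ 2 + vy ^+ 2 + vz ^+ 2) * MarkovPell (2 * k - 1)
       - vx ^+ 2 * vy ^+ 2 * vz ^+ 4 * MarkovPell (2 * k - 3))
  /\ MarkovPell 1 = 1
  /\ (forall (k : nat) (P : Zxyz), (1 <= k)%N -> IsMarkovNumerator k k.+1 P ->
        MarkovPell (2 * k + 1) = sqsubst P).
Proof.
split.
  case=> [|[|j]] // _.
  have -> : (2 * j.+2 + 1 = (j.+2).*2.+1)%N by rewrite -mul2n addn1.
  have -> : (2 * j.+2 - 1 = (j.+1).*2.+1)%N by rewrite -mul2n; lia.
  have -> : (2 * j.+2 - 3 = j.*2.+1)%N by rewrite -mul2n; lia.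
  exact: (u_rec j).
split; first by [].
move=> k P hk [_ hP].
have -> : (2 * k + 1 = k.*2.+1)%N by rewrite -mul2n addn1.
have e1 : (k.+1 - 1 = k)%N by lia.
have e2 : (k + k.+1 - 1 = 2 * k)%N by lia.
rewrite e1 e2 in hP.
have hm := @markov_val k hk.
have eT : TF ^+ k = fx * (fx ^+ (k - 1) * fy ^+ k * fz ^+ (2 * k)).
  rewrite /TF !exprMn.
  have -> : fz ^+ (2 * k) = fz ^+ k * fz ^+ k by rewrite mul2n -addnn exprD.
  have -> : fx ^+ k = fx * fx ^+ (k - 1) by rewrite -exprS; congr (_ ^+ _); lia.
  ring.
rewrite eT mulrCA hP in hm.
have h2 := mulfI fx_neq0 hm.
apply/eqP; rewrite -(@tofrac_eq Zxyz); apply/eqP.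
exact: esym h2.
Qed.
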